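(* For every string $T\in[1..\sigma]^{n-1}\#$, the number $z_T$ of factors in the LZ77 factorization of $T$ satisfies $z_T\le|\mathcal{E}^r_T|+|\mathcal{F}^r_T|$.
   Context: Let $\sigma\ge1$, $\#=0\notin[1..\sigma]$, and $T\in[1..\sigma]^{n-1}\#$ of length $n\ge2$. LZ77 factorization: let $A$ be a string containing each distinct character of $T$ exactly once, and consider $AT$ (so $T$ is virtually preceded by its alphabet). The factorization $T=T_1T_2\cdots T_z$ is built greedily: if $T_1\cdots T_i$ is a prefix of $T$ of length $k$, then $T_{i+1}$ is the longest prefix of $T[k+1..n]$ that has an occurrence in $AT$ starting at a position corresponding to some $j\le k$ in $T$-coordinates (positions of $A$ allowed; overlap with $T[k+1..]$ allowed); $z_T=z$. For a string $W$, $\mathcal{P}_T(W)$ is the set of starting positions of occurrences of $W$ in the circular version of $T$; $\Sigma^{\ell}_T(W)=\{a: \mathcal{P}_T(aW)\neq\emptyset\}$, $\Sigma^{r}_T(W)=\{b:\mathcal{P}_T(Wb)\ne\emptyset\}$. A repeat is a string $W$ (possibly empty) with $|\mathcal{P}_T(W)|>1$; right-maximal iff $|\Sigma^r_T(W)|>1$, left-maximal iff $|\Sigma^\ell_T(W)|>1$, maximal repeat iff both; $\mathcal{M}_T$ is the set of maximal repeats. $\mathsf{ST}_T$ is the suffix tree of $T$, $\ell(v)$ the label of node $v$. $\mathcal{E}^r_T$ is the set of edges $(v,w)$ of $\mathsf{ST}_T$ with $v=\mathrm{parent}(w)$ and both $\ell(v),\ell(w)\in\mathcal{M}_T$; $\mathcal{F}^r_T$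 is the set of such edges with $\ell(v)\in\mathcal{M}_T$ and $\ell(w)\notin\mathcal{M}_T$. *)

(* Defs.v *)
(* Strings are [seq nat]; the end marker # is 0. *)
From mathcomp Require Import all_boot.
Set Implicit Arguments. Unset Strict Implicit. Unset Printing Implicit Defensive.

(* [lzlen A T k] : length of the LZ77 factor starting at 0-based position k of T
   (i.e. after a prefix of length k has been factorized): the longest l <= |T|-k
   such that T[k..k+l) occurs in A ++ T starting at a position p < |A| + k
   (i.e. at a T-coordinate j <= k, positions of A allowed, overlap allowed). *)
Definition lzlen (A T : seq nat) (k : nat) : nat :=
  \max_(l < (size T - k).+1 |
        [exists p : 'I_(size A + k),
           take l (drop p (A ++ T)) == take l (drop k T)]) l.

(* Greedy factorization, counting factors from position k.  The fuel is only
   a termination device: every factor has length >= 1 (A contains every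
   character of T), so fuel [size T] suffices. *)
Fixpoint lz_count (A T : seq nat) (fuel k : nat) : nat :=
  match fuel with
  | 0 => 0
  | f.+1 => if k < size T then (lz_count A T f (k + lzlen A T k)).+1 else 0
  end.

Definition lz_z (A T : seq nat) : nat := lz_count A T (size T) 0.

Definition circ_occ (T W : seq nat) (i : nat) : bool :=
  all (fun t => nth 0 T ((i + t) %% size T) == nth 0 W t) (iota 0 (size W)).

Definition occs (T W : seq nat) : seq nat :=
  [seq i <- iota 0 (size T) | circ_occ T W i].

(* Sigma^l_T(W), Sigma^r_T(W): a character a with P_T(aW) nonempty necessarily
   occurs in T, so it suffices to range over the distinct characters of T. *)
Definition left_ext (T W : seq nat) : seq nat :=
  [seq a <- undup T | occs T (a :: W) != [::]].
Definition right_ext (T W : seq nat) : seq nat :=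
  [seq b <- undup T | occs T (rcons W b) != [::]].

Definition is_repeat (T W : seq nat) : bool := 1 < size (occs T W).
Definition is_maxrep (T W : seq nat) : bool :=
  [&& is_repeat T W, 1 < size (right_ext T W) & 1 < size (left_ext T W)].

Definition substrings (T : seq nat) : seq (seq nat) :=
  undup (flatten [seq [seq take l (drop i T) | l <- iota 0 (size T - i).+1]
                  | i <- iota 0 (size T)]).

Definition st_right_ext (T W : seq nat) : seq nat :=
  undup [seq nth 0 T (i + size W) |
          i <- iota 0 (size T) & (i + size W < size T) &&
                                 (take (size W) (drop i T) == W)].

(* labels of nodes of ST_T: the root (empty string), the internal nodes
   (right-branching substrings), and the leaves (nonempty suffixes of T). *)
Definition st_node (T W : seq nat) : bool :=
  [|| W == [::],
      1 < size (st_right_ext T W)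
    | (0 < size W <= size T) && (drop (size T - size W) T == W)].

Definition st_nodes (T : seq nat) : seq (seq nat) :=
  [seq W <- substrings T | st_node T W].

(* (v,w) is an edge of ST_T with v = parent(w): v is the longest node label
   that is a proper prefix of w. *)
Definition st_edge (T v w : seq nat) : bool :=
  [&& st_node T v, st_node T w, prefix v w, size v < size w &
      all (fun m => ~~ st_node T (take m w))
          (iota (size v).+1 (size w - (size v).+1))].

Definition st_edges (T : seq nat) : seq (seq nat * seq nat) :=
  [seq e <- [seq (v, w) | v <- st_nodes T, w <- st_nodes T] | st_edge T e.1 e.2].

Definition Er (T : seq nat) : seq (seq nat * seq nat) :=
  [seq e <- st_edges T | is_maxrep T e.1 && is_maxrep T e.2].
Definition Fr (T : seq nat) : seq (seq nat * seq nat) :=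
  [seq e <- st_edges T | is_maxrep T e.1 && ~~ is_maxrep T e.2].

(* Main.v *)
Require Import Defs.
From mathcomp Require Import all_boot zify.
Set Implicit Arguments. Unset Strict Implicit. Unset Printing Implicit Defensive.

Definition sub (T : seq nat) i m := take m (drop i T).

Lemma nth_sub T i m t : t < m -> nth 0 (sub T i m) t = nth 0 T (i + t).
Proof. by move=> h; rewrite /sub nth_take // nth_drop. Qed.

Lemma size_sub T i m : size (sub T i m) = minn m (size T - i).
Proof. rewrite /sub size_take size_drop; case: ltnP => h; lia. Qed.

Lemma size_sub_le T i m : i + m <= size T -> size (sub T i m) = m.
Proof. rewrite size_sub; lia. Qed.

Lemma sub_eqP T a b m : a + m <= size T -> b + m <= size T ->
  reflect (forall t, t < m -> nth 0 T (a + t) = nth 0 T (b + t)) (sub T a m == sub T b m).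
Proof.
move=> ha hb; apply: (iffP eqP) => [E t ht|H].
  by rewrite -(@nth_sub T a m t ht) -(@nth_sub T b m t ht) E.
apply: (eq_from_nth (x0 := 0)); first by rewrite !size_sub_le.
by move=> t; rewrite size_sub_le // => ht; rewrite !nth_sub // H.
Qed.

Lemma circP T W x : reflect (forall t, t < size W -> nth 0 T ((x + t) %% size T) = nth 0 W t)
  (circ_occ T W x).
Proof.
apply: (iffP allP) => [H t ht|H t]; first by apply/eqP; apply: H; rewrite mem_iota.
by rewrite mem_iota => /andP [_ ht]; apply/eqP; apply: H.
Qed.

Lemma circ_sub T i m : circ_occ T (sub T i m) i.
Proof.
apply/circP => t; rewrite size_sub => ht.
rewrite nth_sub; last by lia.
by rewrite modn_small //; lia.
Qed.

Lemma circ_drop T X x d : circ_occ T X x -> circ_occ T (drop d X) ((x + d) %% size T).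
Proof.
move/circP => H; apply/circP => t; rewrite size_drop => ht.
by rewrite modnDml -addnA H ?nth_drop //; lia.
Qed.

Lemma circ_rcons T X x : circ_occ T X x ->
  circ_occ T (rcons X (nth 0 T ((x + size X) %% size T))) x.
Proof.
move/circP => H; apply/circP => t; rewrite size_rcons ltnS => ht.
rewrite nth_rcons; case: ltngtP ht => // [h|->] _; first exact: H.
by [].
Qed.

Lemma circ_cons T X x : 0 < size T -> circ_occ T X x ->
  circ_occ T (nth 0 T ((x + (size T).-1) %% size T) :: X) ((x + (size T).-1) %% size T).
Proof.
move=> hn /circP H; apply/circP => [[|t]] /=; first by rewrite addn0 modn_mod.
rewrite ltnS => ht; rewrite modnDml -H //.
have -> : x + (size T).-1 + t.+1 = (x + t) + size T by lia.
by rewrite modnDr.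
Qed.

Lemma shift_inj N d x y : x < N -> y < N -> (x + d) %% N = (y + d) %% N -> x = y.
Proof.
move=> hx hy /eqP; rewrite eqn_modDr => /eqP; rewrite !modn_small //.
Qed.

Lemma mem_occs T W x : (x \in occs T W) = (x < size T) && circ_occ T W x.
Proof. by rewrite mem_filter mem_iota andbC. Qed.

Lemma uniq_occs T W : uniq (occs T W).
Proof. exact/filter_uniq/iota_uniq. Qed.

Lemma occs_le_shift T X Y d :
  (forall x, x \in occs T X -> (x + d) %% size T \in occs T Y) ->
  size (occs T X) <= size (occs T Y).
Proof.
move=> H.
have -> : size (occs T X) = size [seq (x + d) %% size T | x <- occs T X] by rewrite size_map.
apply: uniq_leq_size.
  rewrite map_inj_in_uniq ?uniq_occs // => x y; rewrite !mem_occs => /andP[hx _] /andP[hy _].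
  exact: shift_inj.
by move=> z /mapP [x hx ->]; apply: H.
Qed.

Lemma two_le_size (s : seq nat) a b : a \in s -> b \in s -> a != b -> 1 < size s.
Proof.
case: s => [|c [|d s]] //= ; rewrite !inE => /eqP -> /eqP ->; by rewrite eqxx.
Qed.

Lemma bigmax_ub N (P : pred nat) y : y < N -> P y -> y <= \max_(i < N | P i) i.
Proof. move=> hy Py; exact: (@leq_bigmax_cond _ (fun i : 'I_N => P i) (fun i => nat_of_ord i) (Ordinal hy)). Qed.

Lemma bigmax_lt N (P : pred nat) : 0 < N -> \max_(i < N | P i) i < N.
Proof.
move=> hN; rewrite (_ : N = N.-1.+1) ?ltnS; last by lia.
by apply/bigmax_leqP => i _; have := ltn_ord i; lia.
Qed.

Lemma bigmax_P N (P : pred nat) y : y < N -> P y -> P (\max_(i < N | P i) i).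
Proof.
move=> hy Py.
have hc : 0 < #|(fun i : 'I_N => P i)|.
  by apply/card_gt0P; exists (Ordinal hy).
have [i0 Hi0 E] := eq_bigmax_cond (fun i : 'I_N => nat_of_ord i) hc.
have -> : \max_(i < N | P i) i = \max_(i in (fun i : 'I_N => P i)) i by [].
by rewrite E.
Qed.

Lemma bigmax_0 N (P : pred nat) : 0 < \max_(i < N | P i) i -> exists2 y, y < N & P y.
Proof.
case: (boolP [exists i : 'I_N, P i]) => [/existsP [i Pi]|/existsPn H].
  by exists i.
by rewrite big_pred0 // => i; apply/negbTE/H.
Qed.

Definition goodT (T : seq nat) := [/\ 1 < size T, nth 0 T (size T).-1 = 0 &
  forall i, i < (size T).-1 -> 0 < nth 0 T i].

Lemma zero_last T i : goodT T -> i < size T -> nth 0 T i = 0 -> i = (size T).-1.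
Proof.
case=> h1 h2 h3 hi h0; case: (ltnP i (size T).-1) => h; last by lia.
by have := h3 _ h; rewrite h0.
Qed.

Lemma sub_eq_range T a b m : 0 < m -> sub T a m = sub T b m -> b + m <= size T -> a + m <= size T.
Proof. move=> hm E hb; have := congr1 size E; rewrite !size_sub; lia. Qed.

Definition w0 T k := \max_(m < (size T - k).+1 | [exists j : 'I_k, sub T j m == sub T k m]) m.

Lemma w0_le T k : w0 T k <= size T - k.
Proof. rewrite -ltnS; by apply: (@bigmax_lt _ (fun m => [exists j : 'I_k, sub T j m == sub T k m])). Qed.

Lemma w0_max T k m j : m <= size T - k -> j < k -> sub T j m = sub T k m -> m <= w0 T k.
Proof.
move=> hm hj E.
apply: (@bigmax_ub _ (fun m => [exists j : 'I_k, sub T j m == sub T k m])); first by rewrite ltnS.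
by apply/existsP; exists (Ordinal hj); rewrite /= E.
Qed.

Lemma w0_wit T k : 0 < w0 T k -> exists2 j, j < k & sub T j (w0 T k) = sub T k (w0 T k).
Proof.
move=> /(@bigmax_0 _ (fun m => [exists j : 'I_k, sub T j m == sub T k m])) [y hy Py].
have := @bigmax_P _ (fun m => [exists j : 'I_k, sub T j m == sub T k m]) _ hy Py.
by move=> /existsP [j /eqP E]; exists j.
Qed.

Lemma e_lt T k : goodT T -> k < size T -> k + w0 T k < size T.
Proof.
move=> G hk; have hle := w0_le T k.
case: (ltnP (k + w0 T k) (size T)) => // hge.
have hw : 0 < w0 T k by lia.
have [j hj E] := w0_wit hw.
have hk2 : k + w0 T k <= size T by lia.
have hr := sub_eq_range hw E hk2.
move/eqP: E => /(sub_eqP hr hk2) H.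
have hw1 : (w0 T k).-1 < w0 T k by lia.
have := H _ hw1.
rewrite (_ : k + (w0 T k).-1 = (size T).-1); last by lia.
case: G => h1 h2 h3; rewrite h2 => E2.
have hj2 : j + (w0 T k).-1 < size T by lia.
have := zero_last (And3 h1 h2 h3) hj2 E2; lia.
Qed.

Lemma next_ne T k j : goodT T -> k < size T -> j < k ->
  sub T j (w0 T k) = sub T k (w0 T k) ->
  nth 0 T (j + w0 T k) != nth 0 T (k + w0 T k).
Proof.
move=> G hk hj E; apply/negP => /eqP E2.
have he := e_lt G hk.
have hk2 : k + (w0 T k).+1 <= size T by lia.
have hj2 : j + (w0 T k).+1 <= size T by lia.
have : sub T j (w0 T k).+1 == sub T k (w0 T k).+1.
  apply/(sub_eqP hj2 hk2) => t; rewrite ltnS leq_eqVlt => /orP [/eqP ->|ht] //.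
  have hj3 : j + w0 T k <= size T by lia.
  have hk3 : k + w0 T k <= size T by lia.
  by move/eqP: E => /(sub_eqP hj3 hk3) /(_ t ht).
move/eqP => /(w0_max _ hj) H.
have : (w0 T k).+1 <= w0 T k by apply: H; lia.
by rewrite ltnn.
Qed.

Lemma w0_lz A T k : w0 T k <= lzlen A T k.
Proof.
case: (posnP (w0 T k)) => [->//|hw].
have [j hj E] := w0_wit hw.
apply: (@bigmax_ub _ (fun l => [exists p : 'I_(size A + k),
           take l (drop p (A ++ T)) == take l (drop k T)])).
  by rewrite ltnS w0_le.
have hp : size A + j < size A + k by rewrite ltn_add2l.
apply/existsP; exists (Ordinal hp) => /=.
rewrite drop_cat ltnNge leq_addr /= addKn.
by apply/eqP; exact: E.
Qed.

Lemma lz_pos A T k : k < size T -> A =i T -> 0 < lzlen A T k.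
Proof.
move=> hk hA.
have hin : nth 0 T k \in A by rewrite hA mem_nth.
have hp : index (nth 0 T k) A < size A + k.
  by apply: (leq_trans _ (leq_addr _ _)); rewrite index_mem.
apply: (leq_trans _ (@bigmax_ub _ (fun l => [exists p : 'I_(size A + k),
           take l (drop p (A ++ T)) == take l (drop k T)]) 1 _ _)) => //.
  by rewrite ltnS subn_gt0.
apply/existsP; exists (Ordinal hp) => /=.
have hi : index (nth 0 T k) A < size A by rewrite index_mem.
have hs : index (nth 0 T k) A < size (A ++ T) by rewrite size_cat; lia.
rewrite (drop_nth 0 hs) (drop_nth 0 hk) /= nth_cat hi nth_index // !take0 eqxx //.
Qed.

Definition ee T k := k + w0 T k.
Definition sPred T k := fun s => (w0 T k <= s) &&
  (size (occs T (sub T (ee T k - s) s)) == size (occs T (sub T k (w0 T k)))).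
Definition ss T k := \max_(s < (ee T k).+1 | sPred T k s) s.
Definition MM T k := sub T (ee T k - ss T k) (ss T k).

Lemma ss_spec T k : [/\ w0 T k <= ss T k, ss T k <= ee T k,
  size (occs T (MM T k)) = size (occs T (sub T k (w0 T k))) &
  forall s, s <= ee T k -> sPred T k s -> s <= ss T k].
Proof.
have h0 : sPred T k (w0 T k) by rewrite /sPred leqnn /ee addnK eqxx.
have hw : w0 T k < (ee T k).+1 by rewrite ltnS leq_addl.
have := @bigmax_P _ (sPred T k) _ hw h0; rewrite -/(ss T k) => /andP [h1 /eqP h2].
split => //.
  by rewrite -ltnS; apply: (@bigmax_lt _ (sPred T k)).
by move=> s hs Ps; apply: (@bigmax_ub _ (sPred T k)).
Qed.

Lemma drop_sub T i s d : i + s <= size T -> d <= s -> drop d (sub T i s) = sub T (i + d) (s - d).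
Proof.
move=> h hd; apply: (eq_from_nth (x0 := 0)).
  by rewrite size_drop !size_sub_le //; lia.
move=> t; rewrite size_drop size_sub_le // => ht.
by rewrite nth_drop !nth_sub ?addnA //; lia.
Qed.

Lemma twoW0 T k : goodT T -> k < size T ->
  exists c1 c2, [/\ c1 \in occs T (sub T k (w0 T k)), c2 \in occs T (sub T k (w0 T k)) &
    nth 0 T ((c1 + w0 T k) %% size T) != nth 0 T ((c2 + w0 T k) %% size T)].
Proof.
move=> G hk; have he := e_lt G hk.
case: (posnP (w0 T k)) => [->|hw].
  case: G => h1 h2 h3.
  exists 0, (size T).-1; rewrite !mem_occs /sub take0 !addn0.
  rewrite !modn_small; try lia.
  have : 0 < nth 0 T 0 by apply: h3; lia.
  by rewrite h2 /circ_occ /= ; split => //; [lia|lia|]; rewrite -lt0n.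
have [j hj E] := w0_wit hw.
exists j, k; rewrite !mem_occs -{1}E !circ_sub !modn_small; try lia.
split => //; [apply/andP; split => //; lia | rewrite hk // |].
exact: next_ne.
Qed.

Lemma MM_size T k : goodT T -> k < size T -> ee T k - ss T k + ss T k = ee T k /\ size (MM T k) = ss T k.
Proof.
move=> G hk; have he := e_lt G hk; have [h1 h2 _ _] := ss_spec T k.
split; first by lia.
by rewrite size_sub_le //; rewrite /ee in h2 *; lia.
Qed.

Lemma surjM T k c : goodT T -> k < size T -> c \in occs T (sub T k (w0 T k)) ->
  exists2 x, x \in occs T (MM T k) &
    nth 0 T ((x + ss T k) %% size T) = nth 0 T ((c + w0 T k) %% size T).
Proof.
move=> G hk hc; have he := e_lt G hk; have [h1 h2 h3 _] := ss_spec T k.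
set d := ss T k - w0 T k.
have hD : drop d (MM T k) = sub T k (w0 T k).
  rewrite /MM drop_sub; try (unfold ee in *; lia).
  by congr sub; unfold ee in *; rewrite /d; lia.
set f := fun x => (x + d) %% size T.
have U : uniq [seq f x | x <- occs T (MM T k)].
  rewrite map_inj_in_uniq ?uniq_occs // => x y; rewrite !mem_occs => /andP[hx _] /andP[hy _].
  exact: shift_inj.
have S : {subset [seq f x | x <- occs T (MM T k)] <= occs T (sub T k (w0 T k))}.
  move=> z /mapP [x]; rewrite mem_occs => /andP [hx cx] ->.
  rewrite mem_occs ltn_mod; case: G => hn _ _; rewrite (_ : 0 < size T); last by lia.
  by rewrite -hD circ_drop.
have hsz : size (occs T (sub T k (w0 T k))) <= size [seq f x | x <- occs T (MM T k)] by rewrite size_map h3.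
have [_ /(_ c)] := uniq_min_size U S hsz.
rewrite hc => /mapP [x hx Ex]; exists x => //.
rewrite Ex /f modnDml -addnA; congr (nth 0 T ((x + _) %% _)); rewrite /d; lia.
Qed.

Lemma mem_nonnil (s : seq nat) x : x \in s -> s != [::].
Proof. by case: s. Qed.

Lemma sub_cons T i s : 0 < i -> i <= size T ->
  sub T i.-1 s.+1 = nth 0 T i.-1 :: sub T i s.
Proof.
move=> hi hT; rewrite /sub (drop_nth 0) /=; last by lia.
by rewrite prednK.
Qed.

Lemma lin_occ T M x : goodT T -> x < size T -> (forall t, t < size M -> 0 < nth 0 M t) ->
  circ_occ T M x -> x + size M < size T /\ sub T x (size M) = M.
Proof.
move=> G hx hM /circP H.
case: (ltnP (x + size M) (size T)) => hl.
  split => //; apply: (eq_from_nth (x0 := 0)); first by rewrite size_sub_le //; lia.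
  move=> t; rewrite size_sub_le; last by lia.
  move=> ht; rewrite nth_sub // -H // modn_small //; lia.
have ht : (size T).-1 - x < size M by lia.
have := H _ ht; rewrite (_ : x + ((size T).-1 - x) = (size T).-1); last by lia.
case: G => h1 h2 h3; rewrite modn_small; last by lia.
by rewrite h2 => E; have := hM _ ht; rewrite -E.
Qed.

Lemma MM_good T k : goodT T -> k < size T -> is_maxrep T (MM T k) && st_node T (MM T k).
Proof.
move=> G hk.
have he := e_lt G hk.
have [h1 h2 h3 h4] := ss_spec T k.
have [hi hsz] := MM_size G hk.
have hn : 0 < size T by case: G => ? _ _; lia.
have [x1 [x2 [hx1 hx2 hne]]] : exists x1 x2, [/\ x1 \in occs T (MM T k),
    x2 \in occs T (MM T k) &
    nth 0 T ((x1 + ss T k) %% size T) != nth 0 T ((x2 + ss T k) %% size T)].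
  have [c1 [c2 [hc1 hc2 hc]]] := twoW0 G hk.
  have [y1 hy1 E1] := surjM G hk hc1.
  have [y2 hy2 E2] := surjM G hk hc2.
  by exists y1, y2; rewrite E1 E2.
have hx12 : x1 != x2 by apply: contraNneq hne => ->.
have memR : forall x, x \in occs T (MM T k) ->
    nth 0 T ((x + ss T k) %% size T) \in right_ext T (MM T k).
  move=> x hx; rewrite mem_filter mem_undup mem_nth ?ltn_mod // andbT.
  apply: (@mem_nonnil _ x); move: hx; rewrite !mem_occs => /andP [-> c] /=.
  by rewrite -hsz; apply: circ_rcons.
have hR : 1 < size (right_ext T (MM T k)) by apply: (two_le_size (memR _ hx1) (memR _ hx2)).
have hRep : is_repeat T (MM T k) by rewrite /is_repeat (two_le_size hx1 hx2 hx12).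
have [y1 [y2 [hy1 hy2 hyne]]] : exists y1 y2, [/\ y1 \in occs T (MM T k),
    y2 \in occs T (MM T k) &
    nth 0 T ((y1 + (size T).-1) %% size T) != nth 0 T ((y2 + (size T).-1) %% size T)].
  case: (ltngtP (ss T k) (ee T k)) => [hlt|hgt|heq]; last 2 first.
  - by exfalso; lia.
  - have hi0 : ee T k - ss T k = 0 by lia.
    have hy1 : 0 \in occs T (MM T k) by rewrite mem_occs hn /MM hi0 (circ_sub T 0).
    have [y2 hy2 hy20] : exists2 y, y \in occs T (MM T k) & y != 0.
      case: (eqVneq x1 0) => [e1|]; last by exists x1.
      by exists x2 => //; rewrite -e1 eq_sym.
    exists 0, y2; split => //.
    have hy2n : y2 < size T by move: hy2; rewrite mem_occs => /andP [].
    rewrite add0n modn_small; last by lia.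
    rewrite (_ : y2 + _ = y2.-1 + size T); last by lia.
    rewrite modnDr modn_small; last by lia.
    case: G => g1 g2 g3; rewrite g2.
    have hp : 0 < nth 0 T y2.-1 by apply: g3; lia.
    by rewrite eq_sym -lt0n hp.
  set i := ee T k - ss T k.
  have hi0 : 0 < i by rewrite /i; lia.
  have hy1 : i \in occs T (MM T k).
    by rewrite mem_occs circ_sub andbT /i; unfold ee in *; lia.
  have Ei : (i + (size T).-1) %% size T = i.-1.
    rewrite (_ : i + _ = i.-1 + size T); last by lia.
    rewrite modnDr modn_small //; rewrite /i; unfold ee in *; lia.
  case: (boolP (all (fun y => nth 0 T ((y + (size T).-1) %% size T) == nth 0 T i.-1)
     (occs T (MM T k)))) => [Hall|/allPn [y hy Hy]]; last first.
    by exists i, y; rewrite Ei eq_sym.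
  exfalso.
  have EM' : sub T i.-1 (ss T k).+1 = nth 0 T i.-1 :: MM T k.
    by rewrite sub_cons //; rewrite /i; unfold ee in *; lia.
  have L1 : size (occs T (MM T k)) <= size (occs T (sub T i.-1 (ss T k).+1)).
    apply: (occs_le_shift (d := (size T).-1)) => y hy.
    rewrite mem_occs ltn_mod hn EM' /=.
    move/allP: Hall => /(_ y hy) /eqP <-.
    by apply: circ_cons => //; move: hy; rewrite mem_occs => /andP [].
  have L2 : size (occs T (sub T i.-1 (ss T k).+1)) <= size (occs T (MM T k)).
    apply: (occs_le_shift (d := 1)) => y; rewrite !mem_occs ltn_mod hn => /andP [_ c] /=.
    by have := circ_drop 1 c; rewrite EM' /= drop0.
  have : sPred T k (ss T k).+1.
    rewrite /sPred (_ : ee T k - (ss T k).+1 = i.-1); last by rewrite /i; lia.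
    apply/andP; split; first by lia.
    by rewrite -h3; apply/eqP; apply/anti_leq; rewrite L1 L2.
  move/(h4 _ hlt); lia.
have memL : forall y, y \in occs T (MM T k) ->
    nth 0 T ((y + (size T).-1) %% size T) \in left_ext T (MM T k).
  move=> y hy; rewrite mem_filter mem_undup mem_nth ?ltn_mod // andbT.
  apply: (@mem_nonnil _ ((y + (size T).-1) %% size T)).
  move: hy; rewrite !mem_occs => /andP [_ c]; rewrite ltn_mod hn /=.
  exact: circ_cons.
have hL : 1 < size (left_ext T (MM T k)) by apply: (two_le_size (memL _ hy1) (memL _ hy2)).
rewrite /is_maxrep hRep hR hL /=.
rewrite /st_node; case: (posnP (ss T k)) => [hs0|hs0].
  by rewrite /MM hs0 /sub take0 eqxx.
apply/orP; right; apply/orP; left.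
have hpos : forall t, t < size (MM T k) -> 0 < nth 0 (MM T k) t.
  move=> t; rewrite hsz => ht; rewrite nth_sub //; case: G => g1 g2 g3; apply: g3.
  unfold ee in *; lia.
have memS : forall x, x \in occs T (MM T k) ->
    nth 0 T ((x + ss T k) %% size T) \in st_right_ext T (MM T k).
  move=> x; rewrite mem_occs => /andP [hx c].
  have [hl hs] := lin_occ G hx hpos c.
  rewrite mem_undup -hsz modn_small //.
  apply: map_f; rewrite mem_filter mem_iota hl /= hx andbT.
  by apply/eqP; exact: hs.
exact: (two_le_size (memS _ hx1) (memS _ hx2)).
Qed.

Lemma mem_substrings T i l : i < size T -> l <= size T - i -> sub T i l \in substrings T.
Proof.
move=> hi hl; rewrite /substrings mem_undup.
apply/flatten_mapP; exists i; first by rewrite mem_iota.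
by apply: map_f; rewrite mem_iota; lia.
Qed.

Lemma edge_ex T k : goodT T -> k < size T -> exists w,
  (MM T k, w) \in st_edges T /\ nth 0 w (ss T k) = nth 0 T (ee T k).
Proof.
move=> G hk.
have he := e_lt G hk.
have [h1 h2 h3 h4] := ss_spec T k.
have [hi hsz] := MM_size G hk.
have /andP [_ hnode] := MM_good G hk.
set i := ee T k - ss T k.
have hie : i + ss T k < size T by rewrite /i; unfold ee in *; lia.
pose P m := (ss T k < m) && st_node T (sub T i m).
have exP : exists m, P m.
  exists (size T - i); apply/andP; split; first by lia.
  rewrite /st_node /sub take_oversize; last by rewrite size_drop.
  apply/orP; right; apply/orP; right; rewrite size_drop.
  apply/andP; split; first by apply/andP; split; lia.
  by rewrite (_ : size T - (size T - i) = i) //; lia.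
case: (ex_minnP exP) => m /andP [hm hnm] hmin.
have hmn : m <= size T - i.
  apply: hmin; apply/andP; split; first by lia.
  rewrite /st_node /sub take_oversize; last by rewrite size_drop.
  apply/orP; right; apply/orP; right; rewrite size_drop.
  apply/andP; split; first by apply/andP; split; lia.
  by rewrite (_ : size T - (size T - i) = i) //; lia.
exists (sub T i m); split; last first.
  by rewrite nth_sub // /i; unfold ee in *; congr nth; lia.
rewrite mem_filter; apply/andP; split; last first.
  apply: allpairs_f; rewrite mem_filter.
    by rewrite hnode; apply: mem_substrings; lia.
  by rewrite hnm; apply: mem_substrings; lia.
rewrite /st_edge /= hnode hnm hsz size_sub_le; last by lia.
rewrite hm prefixE hsz /MM -/i /sub take_takel; last by lia.
rewrite eqxx /=.
apply/allP => m'; rewrite mem_iota => /andP [hm1 hm2].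
apply/negP => hn'.
have : m <= m'.
  apply: hmin; apply/andP; split; first by lia.
  by move: hn'; rewrite /sub take_takel //; lia.
lia.
Qed.

Lemma MM_nth T k t : goodT T -> k < size T -> t < ss T k ->
  nth 0 (MM T k) t = nth 0 T (ee T k - ss T k + t).
Proof. by move=> G hk ht; rewrite nth_sub. Qed.

Lemma key_dir T k k' : goodT T -> k < size T -> k' < size T ->
  MM T k = MM T k' -> nth 0 T (ee T k) = nth 0 T (ee T k') -> ee T k < ee T k' -> False.
Proof.
move=> G hk hk' EM Eb hlt.
have he := e_lt G hk; have he' := e_lt G hk'.
have [h1 h2 h3 h4] := ss_spec T k.
have [h1' h2' h3' h4'] := ss_spec T k'.
have [_ hsz] := MM_size G hk; have [_ hsz'] := MM_size G hk'.
have Es : ss T k' = ss T k by rewrite -hsz' -EM hsz.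
set s := ss T k in Es h1 h2 hsz.
set w' := w0 T k'.
have Hpt : forall t, t < s -> nth 0 T (ee T k - s + t) = nth 0 T (ee T k' - s + t).
  move=> t ht; rewrite -(MM_nth G hk ht) EM (MM_nth G hk') ?Es //.
have hw's : w' <= s by rewrite -Es.
have r1 : ee T k - w' + w'.+1 <= size T by unfold ee in *; lia.
have r2 : k' + w'.+1 <= size T by unfold ee in *; lia.
have : sub T (ee T k - w') w'.+1 == sub T k' w'.+1.
  apply/(sub_eqP r1 r2) => t; rewrite ltnS leq_eqVlt => /orP [/eqP ->|ht].
    rewrite (_ : ee T k - w' + w' = ee T k); last by lia.
    by rewrite Eb.
  have hst : s - w' + t < s by lia.
  have := Hpt _ hst.
  rewrite (_ : ee T k - s + (s - w' + t) = ee T k - w' + t); last by lia.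
  rewrite (_ : ee T k' - s + (s - w' + t) = k' + t) //; unfold ee in *; rewrite -/w'; lia.
move/eqP => E.
have hj : ee T k - w' < k' by unfold ee in *; rewrite -/w'; lia.
have := w0_max (_ : w'.+1 <= size T - k') hj E.
rewrite -/w'; lia.
Qed.

Lemma occs_full T X : goodT T -> size (occs T X) = size T -> 0 < size X -> False.
Proof.
case=> g1 g2 g3 E hX.
have : all (circ_occ T X) (iota 0 (size T)).
  by rewrite all_count -size_filter size_iota E.
move/allP => H.
have m0 : 0 \in iota 0 (size T) by rewrite mem_iota; lia.
have m1 : (size T).-1 \in iota 0 (size T) by rewrite mem_iota; lia.
move: (H _ m0) (H _ m1) => /circP c0 /circP c1.
have := c0 0 hX; have := c1 0 hX.
rewrite !addn0 !modn_small; try lia.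
move=> <-; rewrite g2 => E0.
have h0 : 0 < (size T).-1 by lia.
by have := g3 0 h0; rewrite E0.
Qed.

Lemma occs_nil T : size (occs T [::]) = size T.
Proof. by rewrite /occs (@eq_filter _ _ predT) ?filter_predT ?size_iota. Qed.

Lemma key_inj A T k k' : goodT T -> A =i T -> k < size T -> k' < size T ->
  k + lzlen A T k <= k' ->
  (MM T k, nth 0 T (ee T k)) != (MM T k', nth 0 T (ee T k')).
Proof.
move=> G hA hk hk' hkk; apply/negP => /eqP [EM Eb].
case: (ltngtP (ee T k) (ee T k')) => [hlt|hgt|heq].
- exact: key_dir G hk hk' EM Eb hlt.
- exact: key_dir G hk' hk (esym EM) (esym Eb) hgt.
- have hl := lz_pos hk hA; have hw := w0_lz A T k.
  have hw' : w0 T k' = 0 by unfold ee in *; lia.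
  have [h1 _ _ _] := ss_spec T k.
  have [_ _ h3' _] := ss_spec T k'.
  have [_ hsz] := MM_size G hk.
  apply: (occs_full G (X := MM T k')).
    by rewrite h3' hw' /sub take0 occs_nil.
  rewrite -EM hsz; unfold ee in *; lia.
Qed.

Fixpoint starts A T f k : seq nat :=
  if f is f'.+1 then (if k < size T then k :: starts A T f' (k + lzlen A T k) else [::])
  else [::].

Lemma count_starts A T f k : lz_count A T f k = size (starts A T f k).
Proof. by elim: f k => //= f IH k; case: ifP => //= _; rewrite IH. Qed.

Lemma starts_ge A T f k x : x \in starts A T f k -> k <= x < size T.
Proof.
elim: f k => //= f IH k; case: ifP => // hk; rewrite inE => /orP [/eqP ->|/IH]; first by rewrite leqnn.
lia.
Qed.

Lemma starts_pw A T f k : pairwise (fun a b => a + lzlen A T a <= b) (starts A T f k).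
Proof.
elim: f k => //= f IH k; case: ifP => // hk /=; rewrite IH andbT.
by apply/allP => x /starts_ge /andP [].
Qed.

Lemma uniq_map_pw (X : eqType) (f : nat -> X) (R : rel nat) s : pairwise R s ->
  (forall a b, a \in s -> b \in s -> R a b -> f a != f b) -> uniq (map f s).
Proof.
elim: s => //= a s IH /andP [Ha Hs] H; apply/andP; split.
  apply/mapP => [[b hb E]].
  have hb2 : b \in a :: s by rewrite inE hb orbT.
  have := H a b (mem_head _ _) hb2 (allP Ha b hb); by rewrite E eqxx.
apply: IH => // x y hx hy hr; apply: H => //; rewrite inE ?hx ?hy orbT //.
Qed.

Lemma count_split (X : Type) (a b : pred X) s :
  count (fun e => a e && b e) s + count (fun e => a e && ~~ b e) s = count a s.
Proof. elim: s => //= x s <-; case: (a x); case: (b x) => /=; lia. Qed.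

Theorem theorem2 (sigma : nat) (T A : seq nat) :
  1 <= sigma ->
  2 <= size T ->
  nth 0 T (size T).-1 = 0 ->
  (forall i, i < (size T).-1 -> 1 <= nth 0 T i <= sigma) ->
  uniq A -> A =i T ->
  lz_z A T <= size (Er T) + size (Fr T).
Proof.
move=> _ h2 hl hp _ hA.
have G : goodT T by split => // i /hp /andP [].
set key := fun k => (MM T k, nth 0 T (ee T k)).
set FE := [seq e <- st_edges T | is_maxrep T e.1].
set g := fun e : seq nat * seq nat => (e.1, nth 0 e.2 (size e.1)).
have -> : size (Er T) + size (Fr T) = size (map g FE).
  by rewrite size_map /Er /Fr /FE !size_filter count_split.
rewrite /lz_z count_starts -(size_map key).
apply: uniq_leq_size.
  apply: (uniq_map_pw (starts_pw A T (size T) 0)) => a b ha hb hab.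
  move: (starts_ge ha) (starts_ge hb) => /andP [_ ha'] /andP [_ hb'].
  exact: key_inj.
move=> z /mapP [k hk ->].
have /andP [_ hk'] := starts_ge hk.
have [w [hw Ew]] := edge_ex G hk'.
have /andP [hm _] := MM_good G hk'.
have [_ hsz] := MM_size G hk'.
apply/mapP; exists (MM T k, w); first by rewrite mem_filter hm.
by rewrite /g /= hsz Ew.
Qed.
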